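(* Let $\mathcal{A}$ be a unital dual Banach algebra. If $\mathcal{A}$ is Johnson pseudo-Connes amenable, then $\mathcal{A}$ is approximately Connes amenable.
   Context: A dual Banach algebra is a Banach algebra $\mathcal{A}$ together with a closed $\mathcal{A}$-submodule $\mathcal{A}_*$ of $\mathcal{A}^*$ such that $\mathcal{A}=(\mathcal{A}_* )^*$. A Banach $\mathcal{A}$-bimodule $E$ is normal dual if $E=(E_* )^*$ for a closed submodule $E_*$ of $E^*$ and the module maps $a\mapsto a\cdot x$, $a\mapsto x\cdot a$ are weak$^*$-weak$^*$ continuous. $\mathcal{A}$ is approximately Connes amenable if for every normal dual Banach $\mathcal{A}$-bimodule $E$, every weak$^*$-continuous derivation $D:\mathcal{A}\to E$ is approximately inner, i.e. there is a net $(x_\alpha)$ in $E$ with $D(a)=\lim_\alpha(a\cdot x_\alpha-x_\alpha\cdot a)$ for all $a$. For a bimodule $E$, $\sigma wc(E)$ is the set of $x\in E$ for which $a\mapsto a\cdot x$, $a\mapsto x\cdot a$ are weak$^*$-weak continuous. $\mathcal{A}\hat{\otimes}\mathcal{A}$ has actions $a\cdot(b\otimes c)=ab\otimes c$, $(b\otimes c)\cdot a=b\otimes ca$; duals carry the dual actions. $\pi_{\mathcal{A}}$ is the multiplication map $\mathcal{A}\hat{\otimes}\mathcal{A}\to\mathcal{A}$, $i_{\mathcal{A}_*}:\mathcal{A}_*\hookrightarrow\mathcal{A}^*$ the canonical embedding. $\mathcal{A}$ is Johnson pseudo-Connes amenable if there is a (not necessarily bounded) net $(m_\alpha)$ in $(\mathcal{A}\hat{\otimes}\mathcal{A})^{**}$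 with $\langle T,a\cdot m_\alpha\rangle=\langle T,m_\alpha\cdot a\rangle$ for all $a\in\mathcal{A}$, $T\in\sigma wc((\mathcal{A}\hat{\otimes}\mathcal{A})^* )$, $\alpha$, and $i_{\mathcal{A}_*}^*\pi_{\mathcal{A}}^{**}(m_\alpha)a\to a$ for every $a\in\mathcal{A}$. *)

(* Defs.v *)
(* Scalars: the complex numbers  C = R[i]  for an
   arbitrary model  R : realType  of the reals (real_closed's [complex]). *)
From HB Require Import structures.
From mathcomp Require Import all_boot all_order all_algebra.
From mathcomp Require Import all_classical all_reals.
From mathcomp Require Import topology normedtype.
From mathcomp Require Import complex.
Set Implicit Arguments. Unset Strict Implicit. Unset Printing Implicit Defensive.
Import Order.TTheory GRing.Theory Num.Theory.
Import numFieldNormedType.Exports.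
Local Open Scope ring_scope.
Local Open Scope classical_set_scope.

Section DualBanach.
Variable K : numFieldType.

Definition directed (I : Type) (le : I -> I -> Prop) : Prop :=
  inhabited I /\ (forall i, le i i) /\
  (forall i j k, le i j -> le j k -> le i k) /\
  (forall i j, exists k, le i k /\ le j k).

Definition netlim (I : Type) (le : I -> I -> Prop) (V : normedModType K)
  (u : I -> V) (l : V) : Prop :=
  forall e : K, 0 < e -> exists i0, forall i, le i0 i -> `|u i - l| < e.

Definition netlimK (I : Type) (le : I -> I -> Prop) (u : I -> K) (l : K) : Prop :=
  forall e : K, 0 < e -> exists i0, forall i, le i0 i -> `|u i - l| < e.

(* continuity of h : X -> Y when X carries the weak topology sigma(X,P) and
   Y the weak topology sigma(Y,Q), stated with nets *)
Definition wcont (X Y : Type) (P : set (X -> K)) (Q : set (Y -> K))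
  (h : X -> Y) : Prop :=
  forall (I : Type) (le : I -> I -> Prop) (u : I -> X) (x : X),
    directed le ->
    (forall p, P p -> netlimK le (fun i => p (u i)) (p x)) ->
    forall q, Q q -> netlimK le (fun i => q (h (u i))) (q (h x)).

Definition lin_fun (X : normedModType K) (f : X -> K) : Prop :=
  (forall x y, f (x + y) = f x + f y) /\ (forall (k : K) x, f (k *: x) = k * f x).

Definition fbnd (X : normedModType K) (f : X -> K) (M : K) : Prop :=
  forall x, `|f x| <= M * `|x|.

Definition in_dual (X : normedModType K) (f : X -> K) : Prop :=
  lin_fun f /\ exists M, fbnd f M.

Definition closed_dual_subspace (X : normedModType K) (P : set (X -> K)) : Prop :=
  (forall f, P f -> in_dual f) /\
  P (fun _ => 0) /\
  (forall f g, P f -> P g -> P (fun x => f x + g x)) /\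
  (forall (k : K) f, P f -> P (fun x => k * f x)) /\
  (forall f, lin_fun f ->
     (forall e : K, 0 < e -> exists g, P g /\ fbnd (fun x => f x - g x) e) ->
     P f).

(* psi is a bounded linear functional on the normed space P (subspace of X^*
   with the operator norm), i.e. psi is an element of P^* *)
Definition in_dual_of (X : Type) (P : set (X -> K)) (bnd : (X -> K) -> K -> Prop)
  (psi : (X -> K) -> K) : Prop :=
  (forall f g, P f -> P g -> psi (fun x => f x + g x) = psi f + psi g) /\
  (forall (k : K) f, P f -> psi (fun x => k * f x) = k * psi f) /\
  exists C, forall f M, P f -> 0 <= M -> bnd f M -> `|psi f| <= C * M.

(* X = (P)^* : P is a closed subspace of X^* and the canonical map
   x |-> (f |-> f x) is an isometric isomorphism of X onto P^* *)
Definition predual_of (X : normedModType K) (P : set (X -> K)) : Prop :=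
  closed_dual_subspace P /\
  (forall psi, in_dual_of P (@fbnd X) psi ->
     exists x : X, forall f, P f -> psi f = f x) /\
  (forall x y : X, (forall f, P f -> f x = f y) -> x = y) /\
  (forall (x : X) (e : K), 0 < e ->
     exists f, P f /\ fbnd f 1 /\ `|x| - e <= `|f x|).

Definition banach_algebra (A : completeNormedModType K) (mul : A -> A -> A) : Prop :=
  (forall a b c, mul (a + b) c = mul a c + mul b c) /\
  (forall a b c, mul a (b + c) = mul a b + mul a c) /\
  (forall (k : K) a b, mul (k *: a) b = k *: mul a b) /\
  (forall (k : K) a b, mul a (k *: b) = k *: mul a b) /\
  (forall a b c, mul (mul a b) c = mul a (mul b c)) /\
  (forall a b, `|mul a b| <= `|a| * `|b|).

Definition unital (A : completeNormedModType K) (mul : A -> A -> A) : Prop :=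
  exists e : A, forall a, mul e a = a /\ mul a e = a.

(* (A, A_* = P) is a dual Banach algebra: P closed A-submodule of A^* for the
   dual actions (a.f)(x) = f(x a), (f.a)(x) = f(a x), and A = (P)^* *)
Definition dual_banach_algebra (A : completeNormedModType K) (mul : A -> A -> A)
  (P : set (A -> K)) : Prop :=
  banach_algebra mul /\ predual_of P /\
  (forall f a, P f -> P (fun x => f (mul x a)) /\ P (fun x => f (mul a x))).

Definition banach_bimodule (A : completeNormedModType K) (mul : A -> A -> A)
  (E : completeNormedModType K) (lact : A -> E -> E) (ract : E -> A -> E) : Prop :=
  (forall a b x, lact (a + b) x = lact a x + lact b x) /\
  (forall a x y, lact a (x + y) = lact a x + lact a y) /\
  (forall (k : K) a x, lact (k *: a) x = k *: lact a x) /\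
  (forall (k : K) a x, lact a (k *: x) = k *: lact a x) /\
  (forall a b x, ract x (a + b) = ract x a + ract x b) /\
  (forall a x y, ract (x + y) a = ract x a + ract y a) /\
  (forall (k : K) a x, ract x (k *: a) = k *: ract x a) /\
  (forall (k : K) a x, ract (k *: x) a = k *: ract x a) /\
  (forall a b x, lact (mul a b) x = lact a (lact b x)) /\
  (forall a b x, ract x (mul a b) = ract (ract x a) b) /\
  (forall a b x, ract (lact a x) b = lact a (ract x b)) /\
  (forall a x, `|lact a x| <= `|a| * `|x|) /\
  (forall a x, `|ract x a| <= `|a| * `|x|).

Definition normal_dual_module (A : completeNormedModType K) (P : set (A -> K))
  (E : completeNormedModType K) (lact : A -> E -> E) (ract : E -> A -> E)
  (Q : set (E -> K)) : Prop :=
  predual_of Q /\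
  (forall g a, Q g -> Q (fun x => g (ract x a)) /\ Q (fun x => g (lact a x))) /\
  (forall x, wcont P Q (fun a => lact a x) /\ wcont P Q (fun a => ract x a)).

Definition derivation (A : completeNormedModType K) (mul : A -> A -> A)
  (E : completeNormedModType K) (lact : A -> E -> E) (ract : E -> A -> E)
  (D : A -> E) : Prop :=
  (forall a b, D (a + b) = D a + D b) /\
  (forall (k : K) a, D (k *: a) = k *: D a) /\
  (forall a b, D (mul a b) = lact a (D b) + ract (D a) b).

Definition approx_inner (A : completeNormedModType K)
  (E : completeNormedModType K) (lact : A -> E -> E) (ract : E -> A -> E)
  (D : A -> E) : Prop :=
  exists (I : Type) (le : I -> I -> Prop) (x : I -> E),
    directed le /\
    forall a, netlim le (fun i => lact a (x i) - ract (x i) a) (D a).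

Definition approx_connes_amenable (A : completeNormedModType K)
  (mul : A -> A -> A) (P : set (A -> K)) : Prop :=
  forall (E : completeNormedModType K) (lact : A -> E -> E) (ract : E -> A -> E)
         (Q : set (E -> K)),
    banach_bimodule mul lact ract -> normal_dual_module P lact ract Q ->
    forall D : A -> E, derivation mul lact ract D -> wcont P Q D ->
      approx_inner lact ract D.

(* (A \hat\otimes A)^* is identified (isometrically, via the universal property
   of the projective tensor product) with the bounded bilinear forms on A x A,
   T(b, c) = <T, b (x) c>. *)
Definition bilbnd (A : completeNormedModType K) (T : A -> A -> K) (M : K) : Prop :=
  forall b c, `|T b c| <= M * `|b| * `|c|.

Definition bbil (A : completeNormedModType K) (T : A -> A -> K) : Prop :=
  (forall b b' c, T (b + b') c = T b c + T b' c) /\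
  (forall b c c', T b (c + c') = T b c + T b c') /\
  (forall (k : K) b c, T (k *: b) c = k * T b c) /\
  (forall (k : K) b c, T b (k *: c) = k * T b c) /\
  exists M, bilbnd T M.

(* elements of (A \hat\otimes A)^** : bounded linear functionals on the
   Banach space of bounded bilinear forms *)
Definition bidual (A : completeNormedModType K) (m : (A -> A -> K) -> K) : Prop :=
  (forall T1 T2, bbil T1 -> bbil T2 ->
     m (fun b c => T1 b c + T2 b c) = m T1 + m T2) /\
  (forall (k : K) T, bbil T -> m (fun b c => k * T b c) = k * m T) /\
  exists C, forall T M, bbil T -> 0 <= M -> bilbnd T M -> `|m T| <= C * M.

(* dual module actions on (A \hat\otimes A)^*, from
   a.(b (x) c) = ab (x) c  and  (b (x) c).a = b (x) ca :
   (a.T)(b,c) = T(b, c a)   and   (T.a)(b,c) = T(a b, c) *)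
Definition lactT (A : completeNormedModType K) (mul : A -> A -> A)
  (a : A) (T : A -> A -> K) : A -> A -> K := fun b c => T b (mul c a).
Definition ractT (A : completeNormedModType K) (mul : A -> A -> A)
  (T : A -> A -> K) (a : A) : A -> A -> K := fun b c => T (mul a b) c.

(* sigma wc of the dual of A \hat\otimes A: a |-> a.T and a |-> T.a are weak*-weak
   continuous, the weak topology of the dual Y of A \hat\otimes A being
   sigma(Y, Y^* ), Y^* = bidual *)
Definition sigma_wc (A : completeNormedModType K) (mul : A -> A -> A)
  (P : set (A -> K)) (T : A -> A -> K) : Prop :=
  bbil T /\
  wcont P (@bidual A) (fun a => lactT mul a T) /\
  wcont P (@bidual A) (fun a => ractT mul T a).

(* For m in (A\hat\otimes A)^**,
   <T, a.m> = <T.a, m> and <T, m.a> = <a.T, m>;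
   pi_A^*(f)(b,c) = f(bc), so i_{A_*}^* pi_A^**(m) is the element y of
   A = (A_* )^* with f(y) = m(pi_A^* f) for all f in A_* . *)
Definition johnson_pseudo_connes_amenable (A : completeNormedModType K)
  (mul : A -> A -> A) (P : set (A -> K)) : Prop :=
  exists (I : Type) (le : I -> I -> Prop) (m : I -> ((A -> A -> K) -> K)),
    directed le /\
    (forall i, bidual (m i)) /\
    (forall i a T, sigma_wc mul P T ->
        m i (ractT mul T a) = m i (lactT mul a T)) /\
    exists y : I -> A,
      (forall i f, P f -> f (y i) = m i (fun b c => f (mul b c))) /\
      (forall a, netlim le (fun i => mul (y i) a) a).

End DualBanach.

(* Main.v *)
Require Import Defs.
From HB Require Import structures.
From mathcomp Require Import all_boot all_order all_algebra.
From mathcomp Require Import all_classical all_reals.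
From mathcomp Require Import topology normedtype.
From mathcomp Require Import complex.
From mathcomp Require Import ring lra zify.
Set Implicit Arguments. Unset Strict Implicit. Unset Printing Implicit Defensive.
Import Order.TTheory GRing.Theory Num.Theory.
Import numFieldNormedType.Exports.
Local Open Scope ring_scope.
Local Open Scope classical_set_scope.

Fixpoint Inl {T : Type} (x : T) (s : seq T) : Prop :=
  match s with [::] => False | y :: s' => y = x \/ Inl x s' end.

Lemma Inl_cat {T : Type} (x : T) s t : Inl x (s ++ t) <-> Inl x s \/ Inl x t.
Proof.
elim: s => [|y s IH] /=; first by split; [right|case].
rewrite IH; tauto.
Qed.

Section Gen1.
Variable K : numFieldType.

Lemma lin0 (X : normedModType K) (f : X -> K) : lin_fun f -> f 0 = 0.
Proof. by case=> _ hs; rewrite -(scale0r (0:X)) hs mul0r. Qed.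

Lemma linN (X : normedModType K) (f : X -> K) x : lin_fun f -> f (- x) = - f x.
Proof. by case=> _ hs; rewrite -scaleN1r hs mulN1r. Qed.

Lemma linB (X : normedModType K) (f : X -> K) x y : lin_fun f -> f (x - y) = f x - f y.
Proof. by move=> hf; rewrite (proj1 hf) linN. Qed.

Lemma span_in (X : normedModType K) (P : set (X -> K)) : closed_dual_subspace P ->
  forall (s : seq (X -> K)), (forall p, Inl p s -> P p) ->
  forall f, lin_fun f -> (forall x, (forall p, Inl p s -> p x = 0) -> f x = 0) -> P f.
Proof.
case=> Pdual [P0 [Padd [Pscal _]]].
elim=> [|p s IH] Ps f lf hf.
  have -> : f = (fun _ => 0) by apply: boolp.funext => x; apply: hf.
  exact: P0.
have Pp : P p by apply: Ps; left.
have lp : lin_fun p := proj1 (Pdual _ Pp).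
have Ps' : forall q, Inl q s -> P q by move=> q hq; apply: Ps; right.
case: (boolp.pselect (exists x0, (forall q, Inl q s -> q x0 = 0) /\ p x0 != 0)).
  case=> x0 [hx0 px0].
  pose x1 := (p x0)^-1 *: x0.
  have px1 : p x1 = 1 by rewrite /x1 (proj2 lp) mulVf.
  have qx1 : forall q, Inl q s -> q x1 = 0.
    by move=> q hq; rewrite /x1 (proj2 (proj1 (Pdual _ (Ps' _ hq)))) (hx0 _ hq) mulr0.
  pose f' := fun x => f x - f x1 * p x.
  have lf' : lin_fun f'.
    split=> [x y|k x]; rewrite /f' ?(proj1 lf) ?(proj2 lf) ?(proj1 lp) ?(proj2 lp); ring.
  have Pf' : P f'.
    apply: (IH Ps' _ lf') => x hx.
    pose z := x - p x *: x1.
    have fz : f z = 0.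
      apply: hf => q0 /= hq0; case: hq0 => [Eq|hq].
        by rewrite -Eq /z (linB _ _ lp) (proj2 lp) px1 mulr1 subrr.
      have lq := proj1 (Pdual _ (Ps' _ hq)).
      by rewrite /z (linB _ _ lq) (proj2 lq) hx // qx1 // mulr0 subrr.
    move: fz; rewrite /z (linB _ _ lf) (proj2 lf) /f' => /eqP.
    rewrite subr_eq0 => /eqP ->; ring.
  have -> : f = (fun x => f' x + f x1 * p x).
    by apply: boolp.funext => x; rewrite /f' subrK.
  exact: (Padd _ _ Pf' (Pscal _ _ Pp)).
move=> hno; apply: (IH Ps' _ lf) => x hx; apply: hf => q [<-|hq]; last exact: hx.
apply/eqP; apply: contrapT => hpx; apply: hno; exists x; split => //; exact/negP.
Qed.

Lemma wc_in (X : normedModType K) (P : set (X -> K)) : closed_dual_subspace P ->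
  forall f : X -> K, lin_fun f ->
  (forall (I : Type) (le : I -> I -> Prop) (u : I -> X) (x : X), directed le ->
     (forall p, P p -> netlimK le (fun i => p (u i)) (p x)) ->
     netlimK le (fun i => f (u i)) (f x)) -> P f.
Proof.
move=> hP f lf hc; apply: contrapT => nPf.
have Pdual := proj1 hP.
have hx : forall s, (forall p, Inl p s -> P p) ->
    exists x, (forall p, Inl p s -> p x = 0) /\ f x = 1.
  move=> s Ps; apply: contrapT => hno; apply: nPf.
  apply: (span_in hP Ps lf) => x hx; apply/eqP; apply: contrapT => /negP fx0.
  apply: hno; exists ((f x)^-1 *: x); split.
    by move=> p hp; rewrite (proj2 (proj1 (Pdual _ (Ps _ hp)))) (hx _ hp) mulr0.
  by rewrite (proj2 lf) mulVf.
pose I := {s : seq (X -> K) | forall p, Inl p s -> P p}.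
pose u (i : I) := projT1 (boolp.cid (hx _ (proj2_sig i))).
have hu : forall i : I, (forall p, Inl p (proj1_sig i) -> p (u i) = 0) /\ f (u i) = 1.
  by move=> i; rewrite /u; case: (boolp.cid _).
pose le (i j : I) := forall p, Inl p (proj1_sig i) -> Inl p (proj1_sig j).
have dir : directed le.
  split; first by constructor; exists [::].
  split; first by move=> i p.
  split; first by move=> i j k hij hjk p /hij /hjk.
  move=> [s Ps] [t Pt].
  have Pst : forall p, Inl p (s ++ t) -> P p.
    by move=> p /Inl_cat [] ?; [apply: Ps|apply: Pt].
  exists (exist _ (s ++ t) Pst); split=> p hp /=; apply/Inl_cat; tauto.
have hnet : netlimK le (fun i => f (u i)) 0.
  rewrite -(lin0 lf); apply: hc => // p Pp e e0.
  have Ps : forall q, Inl q [:: p] -> P q by move=> q [<-|[]].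
  exists (exist _ [:: p] Ps) => i hi.
  rewrite (proj1 (hu i)); last by apply: hi; left.
  by rewrite (lin0 (proj1 (Pdual _ Pp))) subrr normr0.
move: hnet => /(_ 1 ltr01) [i0 hi0].
by move: (hi0 i0 (fun p h => h)); rewrite (proj2 (hu i0)) subr0 normr1 ltxx.
Qed.

End Gen1.

Section UBP.
Variables (K : numFieldType) (A : completeNormedModType K).
Variable (F : set (A -> K)).
Variable g : nat * A * K -> (A -> K) * A * K.

Definition nextr (n : nat) (B r : K) : K := n.+1%:R / (4 * (B + 1 + n.+1%:R / r)).

Fixpoint st (n : nat) : A * K :=
  match n with
  | 0 => (0, 1)
  | n'.+1 => ((g (n', (st n').1, (st n').2)).1.2,
              nextr n' (g (n', (st n').1, (st n').2)).2 (st n').2)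
  end.

Definition gspec (t : nat * A * K) (u : (A -> K) * A * K) : Prop :=
  0 < t.2 -> F u.1.1 /\ 0 <= u.2 /\ (forall z, `|u.1.1 z| <= u.2 * `|z|) /\
    `|u.1.2 - t.1.2| <= t.2 /\ 2 * (t.1.1.+1)%:R < `|u.1.1 u.1.2|.

Hypothesis hg : forall t, gspec t (g t).

Lemma D_pos (B r a : K) : 0 < r -> 0 <= B -> 0 <= a -> 0 < B + 1 + a / r.
Proof.
move=> r0 B0 a0; apply: (@lt_le_trans _ _ 1); first exact: ltr01.
have -> : B + 1 + a / r = (B + a / r) + 1 by ring.
by rewrite -{1}(add0r 1) lerD2r addr_ge0 // divr_ge0 // ltW.
Qed.

Lemma nextr_pos n B r : 0 < r -> 0 <= B -> 0 < nextr n B r.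
Proof.
move=> r0 B0.
have D0 : 0 < B + 1 + n.+1%:R / r by apply: D_pos.
by rewrite /nextr divr_gt0 ?mulr_gt0 ?ltr0n.
Qed.

Lemma nextr_le n B r : 0 < r -> 0 <= B -> nextr n B r <= r / 4.
Proof.
move=> r0 B0; set a : K := n.+1%:R.
have a0 : 0 < a by rewrite ltr0n.
have D0 : 0 < B + 1 + a / r by apply: D_pos => //; apply: ltW.
rewrite /nextr -/a ler_pdivrMr ?mulr_gt0 //.
have -> : r / 4 * (4 * (B + 1 + a / r)) = r * B + r + a.
  by field; rewrite ?(gt_eqF r0) ?pnatr_eq0.
by rewrite lerDr addr_ge0 // ?mulr_ge0 // ltW.
Qed.

Lemma nextr_B n B r : 0 < r -> 0 <= B -> B * nextr n B r <= n.+1%:R / 4.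
Proof.
move=> r0 B0; set a : K := n.+1%:R.
have a0 : 0 < a by rewrite ltr0n.
have D0 : 0 < B + 1 + a / r by apply: D_pos => //; apply: ltW.
rewrite /nextr -/a mulrA ler_pdivrMr ?mulr_gt0 //.
have -> : a / 4 * (4 * (B + 1 + a / r)) = a * (B + 1 + a / r).
  by field; rewrite ?(gt_eqF r0) ?pnatr_eq0.
rewrite mulrC ler_wpM2l ?ltW //.
by rewrite -addrA ltrDl addr_gt0 // divr_gt0.
Qed.

Let x n := (st n).1.
Let r n := (st n).2.
Let phi n := (g (n, x n, r n)).1.1.
Let B n := (g (n, x n, r n)).2.

Lemma r_pos n : 0 < r n.
Proof.
elim: n => [|n IH]; first by rewrite /r /= ltr01.
have := @hg (n, x n, r n) IH => -[_ [B0 _]].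
by rewrite /r /=; apply: nextr_pos.
Qed.

Lemma spec_n n : F (phi n) /\ 0 <= B n /\ (forall z, `|phi n z| <= B n * `|z|) /\
    `|x n.+1 - x n| <= r n /\ 2 * (n.+1)%:R < `|phi n (x n.+1)|.
Proof. exact: (@hg (n, x n, r n) (r_pos n)). Qed.

Lemma r_next n : r n.+1 = nextr n (B n) (r n).
Proof. by []. Qed.

Lemma r_le n : r n.+1 <= r n / 4.
Proof. rewrite r_next; apply: nextr_le; [exact: r_pos|exact: (proj1 (proj2 (spec_n n)))]. Qed.

Lemma Br_le n : B n * r n.+1 <= n.+1%:R / 4.
Proof. rewrite r_next; apply: nextr_B; [exact: r_pos|exact: (proj1 (proj2 (spec_n n)))]. Qed.

Lemma r_small n : r n * n.+1%:R <= 1.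
Proof.
elim: n => [|n IH]; first by rewrite /r /= mul1r.
apply: le_trans IH.
apply: (@le_trans _ _ (r n / 4 * n.+2%:R)).
  by rewrite ler_wpM2r // r_le.
rewrite -mulrA; apply: ler_wpM2l; first exact: ltW (r_pos n).
rewrite mulrC ler_pdivrMr ?ltr0n // -natrM ler_nat; lia.
Qed.

Lemma dist_x n m : (n <= m)%N -> `|x m - x n| <= 2 * r n - 2 * r m.
Proof.
move=> /subnK <-; elim: (m - n)%N => [|k IH]; first by rewrite add0n subrr normr0 subrr.
rewrite addSn.
have h1 := proj1 (proj2 (proj2 (proj2 (spec_n (k + n))))).
have h2 := r_le (k + n).
have -> : x (k + n).+1 - x n = (x (k + n).+1 - x (k + n)) + (x (k + n) - x n).
  by rewrite addrA subrK.
apply: le_trans (ler_normD _ _) _.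
apply: le_trans (lerD h1 IH) _.
have r0 := r_pos (k + n).
have r1 := r_pos (k + n).+1.
have h3 : 2 * r (k + n).+1 <= r (k + n).
  apply: le_trans (_ : 2 * r (k + n).+1 <= 2 * (r (k + n) / 4)) _.
    by apply: ler_wpM2l => //; rewrite ler0n.
  rewrite -subr_ge0.
  have -> : r (k + n) - 2 * (r (k + n) / 4) = r (k + n) / 2 by field.
  by rewrite divr_ge0 // ltW.
rewrite -subr_ge0.
have -> : 2 * r n - 2 * r (k + n).+1 - (r (k + n) + (2 * r n - 2 * r (k + n)))
  = r (k + n) - 2 * r (k + n).+1 by ring.
by rewrite subr_ge0.
Qed.


Lemma r_anti N n : (N <= n)%N -> r n <= r N.
Proof.
move=> /dist_x h; have := le_trans (normr_ge0 _) h.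
rewrite subr_ge0 => h2; rewrite -(ler_pM2l (_ : 0 < 2 :> K)) //.
Qed.

Hypothesis archi : forall c : K, 0 <= c -> exists n : nat, c < n%:R.

Lemma x_cvg : cvg (x @ \oo).
Proof.
apply/cauchy_cvgP/cauchy_ballP => e e0; near_simpl.
have [N HN] : exists N, 2 * r N < e.
  have [N hN] := archi (ltW (divr_gt0 (ltr0n _ 2) e0) : 0 <= 2 / e).
  exists N.
  have hN1 : 2 / e < N.+1%:R by apply: lt_le_trans hN _; rewrite ler_nat.
  have hrN := r_small N.
  rewrite -(ltr_pM2r (ltr0n _ N.+1)).
  apply: (@le_lt_trans _ _ 2).
    by rewrite -mulrA; apply: ler_piMr => //; rewrite ler0n.
  by move: hN1; rewrite ltr_pdivrMr // mulrC.
exists ([set n | N <= n], [set n | N <= n])%N; first by split; exists N.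
move=> [n m] [/= Nn Nm]; rewrite -ball_normE /=.
have hle : forall p q, (N <= p)%N -> (p <= q)%N -> `|x q - x p| < e.
  move=> p q Np pq; apply: le_lt_trans (dist_x pq) _.
  apply: le_lt_trans HN.
  apply: (@le_trans _ _ (2 * r p)).
    by rewrite gerBl mulr_ge0 // ltW // r_pos.
  by apply: ler_wpM2l => //; exact: r_anti.
case/orP: (leq_total n m) => h; first by rewrite distrC; apply: hle.
exact: hle.
Qed.

Hypothesis hF : forall f, F f -> lin_fun f.
Hypothesis hpt : forall z, exists M, forall f, F f -> `|f z| <= M.

Lemma ubp_contra : False.
Proof.
pose xl := lim (x @ \oo).
have cx : x @ \oo --> xl := x_cvg.
have [Mx hMx] := hpt xl.
have Mx0 : 0 <= Mx by apply: le_trans (hMx _ (proj1 (spec_n 0))); exact: normr_ge0.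
have [n hn] := archi Mx0.
have [Fn [Bn0 [hBn [_ hbig]]]] := spec_n n.
have lphi : lin_fun (phi n) := hF Fn.
have rn1 := r_pos n.+1.
have [N _ HN] := (cvgrPdist_lt _ _).1 cx _ rn1.
set m := maxn N n.+1.
have h1 : `|xl - x m| < r n.+1 by apply: HN; rewrite /= leq_maxl.
have h2 : `|x m - x n.+1| <= 2 * r n.+1.
  apply: le_trans (dist_x (leq_maxr N n.+1)) _.
  by rewrite gerBl mulr_ge0 // ltW // r_pos.
have h3 : `|xl - x n.+1| <= 3 * r n.+1.
  have -> : xl - x n.+1 = (xl - x m) + (x m - x n.+1) by rewrite addrA subrK.
  apply: le_trans (ler_normD _ _) _.
  have -> : 3 * r n.+1 = r n.+1 + 2 * r n.+1 by ring.
  by apply: lerD => //; apply: ltW.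
set a := `|phi n (x n.+1)|.
set b := `|phi n (xl - x n.+1)|.
set c := `|phi n xl|.
have hb : b <= 3 * (n.+1%:R / 4).
  apply: le_trans (hBn _) _.
  apply: (@le_trans _ _ (B n * (3 * r n.+1))); first by apply: ler_wpM2l.
  by rewrite mulrCA; apply: ler_wpM2l => //; exact: Br_le.
have hac : a <= c + b.
  rewrite /a /b /c.
  have -> : phi n (x n.+1) = phi n xl - phi n (xl - x n.+1).
    by rewrite (linB _ _ lphi) opprB addrC subrK.
  exact: ler_normB.
have hlt : n.+1%:R + b < a.
  apply: le_lt_trans hbig.
  apply: (@le_trans _ _ (n.+1%:R + 3 * (n.+1%:R / 4))); first by rewrite lerD2l.
  rewrite -subr_ge0.
  have -> : 2 * n.+1%:R - (n.+1%:R + 3 * (n.+1%:R / 4)) = n.+1%:R / 4 :> K by field.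
  by rewrite divr_ge0 // ler0n.
have : n.+1%:R < c.
  by rewrite -(ltrD2r b); apply: lt_le_trans hlt hac.
move=> hc.
have := le_lt_trans (hMx _ Fn) hn.
move=> hc2.
have : c < n.+1%:R by apply: lt_trans hc2 _; rewrite ltr_nat.
by move=> h; have := lt_trans hc h; rewrite ltxx.
Qed.

End UBP.

Theorem ubp (K : numFieldType) (archi : forall c : K, 0 <= c -> exists n : nat, c < n%:R)
  (A : completeNormedModType K) (F : set (A -> K)) :
  (forall f, F f -> lin_fun f /\ exists B, 0 <= B /\ forall z, `|f z| <= B * `|z|) ->
  (forall z, exists M, forall f, F f -> `|f z| <= M) ->
  exists M, forall f z, F f -> `|f z| <= M * `|z|.
Proof.
move=> hF hpt; apply: contrapT => hno.
have big : forall M : K, 0 <= M -> exists f z, F f /\ M * `|z| < `|f z|.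
  move=> M M0; apply: contrapT => h; apply: hno; exists M => f z Ff.
  apply: contrapT => hlt; apply: h; exists f, z; split => //.
  rewrite real_ltNge ?realM ?ger0_real ?normr_ge0 //; exact/negP.
have step : forall t : nat * A * K, exists u, gspec F t u.
  case=> [[n x0] r0]; rewrite /gspec /=.
  case: (boolp.pselect (0 < r0)) => [r0p|r0n]; last first.
    by exists ((fun _ => 0), 0, 0) => /r0n.
  have M0 : 0 <= 2 * n.+1%:R / r0 by rewrite divr_ge0 ?mulr_ge0 ?ler0n // ltW.
  have [f [z [Ff hz]]] := big _ M0.
  have [lf [Bf [Bf0 hB]]] := hF _ Ff.
  have nz : 0 < `|z|.
    rewrite lt_def normr_ge0 andbT; apply/eqP => h0.
    move: hz; rewrite h0 mulr0.
    have -> : z = 0 by apply/eqP; rewrite -normr_eq0 h0.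
    by rewrite (lin0 lf) normr0 ltxx.
  pose c := r0 / `|z|.
  have c0 : 0 < c by rewrite divr_gt0.
  pose w := c *: z.
  have nw : `|w| = r0 by rewrite normrZ (ger0_norm (ltW c0)) divfK // gt_eqF.
  have fw : 2 * n.+1%:R < `|f w|.
    rewrite (proj2 lf) normrM (ger0_norm (ltW c0)).
    apply: (@le_lt_trans _ _ (c * (2 * n.+1%:R / r0 * `|z|))); last first.
      by rewrite ltr_pM2l.
    rewrite le_eqVlt; apply/orP; left; apply/eqP; rewrite /c; field.
    by rewrite (gt_eqF r0p) (gt_eqF nz).
  case: (boolp.pselect (2 * n.+1%:R < `|f (x0 + w)|)) => hp.
    exists (f, x0 + w, Bf) => _; split => //; split => //; split => //; split => //=.
    by rewrite addrC addKr nw.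
  exists (f, x0 - w, Bf) => _; split => //; split => //; split => //; split => /=.
    by rewrite addrC addKr normrN nw.
  have hle : `|f (x0 + w)| <= 2 * n.+1%:R.
    by rewrite real_leNgt ?realM ?ger0_real ?normr_ge0 ?ler0n //; apply/negP.
  have e2 : `|f (x0 + w) - f (x0 - w)| = 2 * `|f w|.
    rewrite (proj1 lf) (linB _ _ lf).
    have -> : f x0 + f w - (f x0 - f w) = 2 * f w by ring.
    by rewrite normrM normr_nat.
  have := ler_normB (f (x0 + w)) (f (x0 - w)); rewrite e2 => hs.
  rewrite -(ltrD2l `|f (x0 + w)|).
  apply: lt_le_trans hs.
  apply: (@le_lt_trans _ _ (2 * n.+1%:R + 2 * n.+1%:R)); first by rewrite lerD2r.
  have -> : 2 * n.+1%:R + 2 * n.+1%:R = 2 * (2 * n.+1%:R) :> K by ring.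
  by rewrite ltr_pM2l.
have [g hg] := boolp.choice step.
apply: (ubp_contra hg archi).
- by move=> f /hF [].
- exact: hpt.
Qed.

Section Main.
Variable K : numFieldType.
Hypothesis archi : forall c : K, 0 <= c -> exists n : nat, c < n%:R.
Variables (A : completeNormedModType K) (mul : A -> A -> A) (P : set (A -> K)).
Hypothesis hA : dual_banach_algebra mul P.
Variables (E : completeNormedModType K) (lact : A -> E -> E) (ract : E -> A -> E)
  (Q : set (E -> K)).
Hypothesis hE : banach_bimodule mul lact ract.
Hypothesis hN : normal_dual_module P lact ract Q.
Variable D : A -> E.
Hypothesis hD : derivation mul lact ract D.
Hypothesis hDw : wcont P Q D.

Lemma in_dual_bnd (X : normedModType K) (f : X -> K) :
  in_dual f -> exists M, 0 <= M /\ fbnd f M.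
Proof.
case=> _ [M hM]; exists `|M|; split => // x.
have h := hM x.
have h0 : 0 <= M * `|x| by apply: le_trans h.
by apply: le_trans h _; rewrite -{1}(ger0_norm h0) normrM normr_id.
Qed.

Let mulDl : forall a b c, mul (a + b) c = mul a c + mul b c.
Proof. by case: hA => [[? _] _]. Qed.
Let mulDr : forall a b c, mul a (b + c) = mul a b + mul a c.
Proof. by case: hA => [[_ [? _]] _]. Qed.
Let mulZl : forall (k : K) a b, mul (k *: a) b = k *: mul a b.
Proof. by case: hA => [[_ [_ [? _]]] _]. Qed.
Let mulZr : forall (k : K) a b, mul a (k *: b) = k *: mul a b.
Proof. by case: hA => [[_ [_ [_ [? _]]]] _]. Qed.
Let mulA : forall a b c, mul (mul a b) c = mul a (mul b c).
Proof. by case: hA => [[_ [_ [_ [_ [? _]]]]] _]. Qed.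
Let mulN : forall a b, `|mul a b| <= `|a| * `|b|.
Proof. by case: hA => [[_ [_ [_ [_ [_ ?]]]]] _]. Qed.

Let lDl : forall a b x, lact (a + b) x = lact a x + lact b x.
Proof. by case: hE. Qed.
Let lDr : forall a x y, lact a (x + y) = lact a x + lact a y.
Proof. by case: hE => _ [? _]. Qed.
Let lZl : forall (k : K) a x, lact (k *: a) x = k *: lact a x.
Proof. by case: hE => _ [_ [? _]]. Qed.
Let lZr : forall (k : K) a x, lact a (k *: x) = k *: lact a x.
Proof. by case: hE => _ [_ [_ [? _]]]. Qed.
Let rDr : forall a b x, ract x (a + b) = ract x a + ract x b.
Proof. by case: hE => _ [_ [_ [_ [? _]]]]. Qed.
Let rDl : forall a x y, ract (x + y) a = ract x a + ract y a.
Proof. by case: hE => _ [_ [_ [_ [_ [? _]]]]]. Qed.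
Let rZr : forall (k : K) a x, ract x (k *: a) = k *: ract x a.
Proof. by case: hE => _ [_ [_ [_ [_ [_ [? _]]]]]]. Qed.
Let rZl : forall (k : K) a x, ract (k *: x) a = k *: ract x a.
Proof. by case: hE => _ [_ [_ [_ [_ [_ [_ [? _]]]]]]]. Qed.
Let lM : forall a b x, lact (mul a b) x = lact a (lact b x).
Proof. by case: hE => _ [_ [_ [_ [_ [_ [_ [_ [? _]]]]]]]]. Qed.
Let rM : forall a b x, ract x (mul a b) = ract (ract x a) b.
Proof. by case: hE => _ [_ [_ [_ [_ [_ [_ [_ [_ [? _]]]]]]]]]. Qed.
Let lr : forall a b x, ract (lact a x) b = lact a (ract x b).
Proof. by case: hE => _ [_ [_ [_ [_ [_ [_ [_ [_ [_ [? _]]]]]]]]]]. Qed.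
Let lN : forall a x, `|lact a x| <= `|a| * `|x|.
Proof. by case: hE => _ [_ [_ [_ [_ [_ [_ [_ [_ [_ [_ [? _]]]]]]]]]]]. Qed.

Let DD : forall a b, D (a + b) = D a + D b.
Proof. by case: hD. Qed.
Let DZ : forall (k : K) a, D (k *: a) = k *: D a.
Proof. by case: hD => _ []. Qed.
Let DM : forall a b, D (mul a b) = lact a (D b) + ract (D a) b.
Proof. by case: hD => _ []. Qed.

Let Qd : forall g, Q g -> in_dual g.
Proof. by case: hN => [[[? _] _] _]. Qed.
Let Pd : forall f, P f -> in_dual f.
Proof. by case: hA => _ [[[? _] _] _]. Qed.
Let Qrep : forall psi, in_dual_of Q (@fbnd _ E) psi -> exists x, forall f, Q f -> psi f = f x.
Proof. by case: hN => [[_ [? _]] _]. Qed.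
Let Prep : forall psi, in_dual_of P (@fbnd _ A) psi -> exists x, forall f, P f -> psi f = f x.
Proof. by case: hA => _ [[_ [? _]] _]. Qed.
Let Qsep : forall x y : E, (forall f, Q f -> f x = f y) -> x = y.
Proof. by case: hN => [[_ [_ [? _]]] _]. Qed.
Let Qnorm : forall (x : E) (e : K), 0 < e -> exists f, Q f /\ fbnd f 1 /\ `|x| - e <= `|f x|.
Proof. by case: hN => [[_ [_ [_ ?]]] _]. Qed.
Let Qmod : forall g a, Q g -> Q (fun x => g (ract x a)) /\ Q (fun x => g (lact a x)).
Proof. by case: hN => _ [? _]. Qed.
Let Nw : forall x, wcont P Q (fun a => lact a x) /\ wcont P Q (fun a => ract x a).
Proof. by case: hN => _ [_ ?]. Qed.
Let Pcl : closed_dual_subspace P.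
Proof. by case: hA => _ [[? _] _]. Qed.

Lemma lact0 a : lact a 0 = 0.
Proof. by move: (lZr 0 a 0); rewrite !scale0r. Qed.
Lemma ract0 a : ract 0 a = 0.
Proof. by move: (rZl 0 a 0); rewrite !scale0r. Qed.
Lemma lactBl a b x : lact (a - b) x = lact a x - lact b x.
Proof. by rewrite lDl -scaleN1r lZl scaleN1r. Qed.
Lemma lactBr a x y : lact a (x - y) = lact a x - lact a y.
Proof. by rewrite lDr -scaleN1r lZr scaleN1r. Qed.
Lemma ractBl a x y : ract (x - y) a = ract x a - ract y a.
Proof. by rewrite rDl -scaleN1r rZl scaleN1r. Qed.

Lemma wc_lact g w : Q g -> P (fun x => g (lact x w)).
Proof.
move=> Qg; have lg := proj1 (Qd Qg).
apply: (wc_in Pcl).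
  split=> [x y|k x]; first by rewrite lDl (proj1 lg).
  by rewrite lZl (proj2 lg).
move=> I le u x dir hu; exact: (proj1 (Nw w) I le u x dir hu g Qg).
Qed.

Lemma wc_D g : Q g -> P (fun c => g (D c)).
Proof.
move=> Qg; have lg := proj1 (Qd Qg).
apply: (wc_in Pcl).
  split=> [x y|k x]; first by rewrite DD (proj1 lg).
  by rewrite DZ (proj2 lg).
move=> I le u x dir hu; exact: (hDw dir hu Qg).
Qed.

Lemma D_bnd : exists MD, 0 <= MD /\ forall c, `|D c| <= MD * `|c|.
Proof.
pose F := fun f : A -> K => exists g, Q g /\ fbnd g 1 /\ f = (fun c => g (D c)).
have [M hM] : exists M, forall f z, F f -> `|f z| <= M * `|z|.
  apply: (ubp archi).
    move=> f [g [Qg [_ ->]]]; split.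
      exact: (proj1 (Pd (wc_D Qg))).
    exact: (in_dual_bnd (Pd (wc_D Qg))).
  move=> z; exists `|D z| => f [g [Qg [g1 ->]]].
  by apply: le_trans (g1 _) _; rewrite mul1r.
exists `|M|; split => // c.
have h : `|D c| <= M * `|c|.
  apply/ler_addgt0Pr => e e0.
  have [g [Qg [g1 hg]]] := Qnorm (D c) e0.
  rewrite -lerBlDr; apply: le_trans hg _.
  apply: (hM (fun c => g (D c))); exists g; split => //.
have h0 : 0 <= M * `|c| by apply: le_trans h.
by apply: le_trans h _; rewrite -{1}(ger0_norm h0) normrM normr_id.
Qed.


Definition Tg (g : E -> K) : A -> A -> K := fun b c => g (lact b (D c)).
Definition pif (f : A -> K) : A -> A -> K := fun b c => f (mul b c).

Lemma Tg_bnd g M MD : Q g -> 0 <= M -> fbnd g M -> 0 <= MD ->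
  (forall c, `|D c| <= MD * `|c|) -> bilbnd (Tg g) (M * MD).
Proof.
move=> Qg M0 hg MD0 hMD b c; rewrite /Tg.
apply: le_trans (hg _) _.
apply: (@le_trans _ _ (M * (`|b| * (MD * `|c|)))).
  apply: ler_wpM2l => //; apply: le_trans (lN _ _) _.
  by apply: ler_wpM2l => //.
by rewrite le_eqVlt; apply/orP; left; apply/eqP; ring.
Qed.

Lemma Tg_bbil g : Q g -> bbil (Tg g).
Proof.
move=> Qg; have lg := proj1 (Qd Qg).
have [MD [MD0 hMD]] := D_bnd.
have [M [M0 hM]] := in_dual_bnd (Qd Qg).
split; first by move=> b b' c; rewrite /Tg lDl (proj1 lg).
split; first by move=> b c c'; rewrite /Tg DD lDr (proj1 lg).
split; first by move=> k b c; rewrite /Tg lZl (proj2 lg).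
split; first by move=> k b c; rewrite /Tg DZ lZr (proj2 lg).
by exists (M * MD); apply: Tg_bnd.
Qed.

Lemma pif_bnd f M : 0 <= M -> fbnd f M -> bilbnd (pif f) M.
Proof.
move=> M0 hf b c; rewrite /pif; apply: le_trans (hf _) _.
by rewrite -mulrA; apply: ler_wpM2l.
Qed.

Lemma pif_bbil f : in_dual f -> bbil (pif f).
Proof.
move=> df; have lf := proj1 df.
have [M [M0 hM]] := in_dual_bnd df.
split; first by move=> b b' c; rewrite /pif mulDl (proj1 lf).
split; first by move=> b c c'; rewrite /pif mulDr (proj1 lf).
split; first by move=> k b c; rewrite /pif mulZl (proj2 lf).
split; first by move=> k b c; rewrite /pif mulZr (proj2 lf).
by exists M; apply: pif_bnd.
Qed.

Lemma psi_dual q : bidual q -> in_dual_of Q (@fbnd _ E) (fun g => q (Tg g)).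
Proof.
case=> qadd [qscal [Cq hCq]].
have [MD [MD0 hMD]] := D_bnd.
split; first by move=> f g Qf Qg; exact: (qadd _ _ (Tg_bbil Qf) (Tg_bbil Qg)).
split; first by move=> k f Qf; exact: (qscal k _ (Tg_bbil Qf)).
exists (Cq * MD) => g M Qg M0 hg.
apply: le_trans (hCq _ (M * MD) (Tg_bbil Qg) (mulr_ge0 M0 MD0) (Tg_bnd Qg M0 hg MD0 hMD)) _.
by rewrite le_eqVlt; apply/orP; left; apply/eqP; ring.
Qed.

Lemma pi_dual q : bidual q -> in_dual_of P (@fbnd _ A) (fun f => q (pif f)).
Proof.
case=> qadd [qscal [Cq hCq]].
split; first by move=> f g Pf Pg; exact: (qadd _ _ (pif_bbil (Pd Pf)) (pif_bbil (Pd Pg))).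
split; first by move=> k f Pf; exact: (qscal k _ (pif_bbil (Pd Pf))).
exists Cq => f M Pf M0 hf.
exact: (hCq _ M (pif_bbil (Pd Pf)) M0 (pif_bnd M0 hf)).
Qed.

Lemma lactT_dec g a : Q g -> lactT mul a (Tg g) =
  (fun b c => Tg (fun z => g (ract z a)) b c + pif (fun x => g (lact x (D a))) b c).
Proof.
move=> Qg; apply: boolp.funext => b; apply: boolp.funext => c.
rewrite /lactT /Tg /pif DM lDr lM lr.
by rewrite (proj1 (proj1 (Qd Qg))) addrC.
Qed.

Lemma ractT_T g a : ractT mul (Tg g) a = Tg (fun z => g (lact a z)).
Proof.
apply: boolp.funext => b; apply: boolp.funext => c.
by rewrite /ractT /Tg lM.
Qed.

Lemma netlimK_add (I : Type) (le : I -> I -> Prop) (u v : I -> K) l1 l2 :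
  directed le -> netlimK le u l1 -> netlimK le v l2 ->
  netlimK le (fun i => u i + v i) (l1 + l2).
Proof.
case=> _ [_ [ltr ljoin]] hu hv e e0.
have e2 : 0 < e / 2 by rewrite divr_gt0.
have [i1 h1] := hu _ e2.
have [i2 h2] := hv _ e2.
have [k [k1 k2]] := ljoin i1 i2.
exists k => i ki.
have -> : u i + v i - (l1 + l2) = (u i - l1) + (v i - l2) by ring.
apply: le_lt_trans (ler_normD _ _) _.
have -> : e = e / 2 + e / 2 by field.
by apply: ltrD; [apply: h1; apply: ltr k1 ki|apply: h2; apply: ltr k2 ki].
Qed.

Lemma Tg_wc g : Q g -> sigma_wc mul P (Tg g).
Proof.
move=> Qg; split; first exact: Tg_bbil.
split.
  move=> I le u x dir hu q hq.
  have [z1 hz1] := Qrep (psi_dual hq).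
  have [z2 hz2] := Prep (pi_dual hq).
  have ev : forall a, q (lactT mul a (Tg g)) = g (ract z1 a) + g (lact z2 (D a)).
    move=> a; rewrite (lactT_dec a Qg).
    have Qa := proj1 (Qmod a Qg).
    have Pa := wc_lact (D a) Qg.
    rewrite (proj1 hq _ _ (Tg_bbil Qa) (pif_bbil (Pd Pa))).
    by rewrite hz1 // hz2.
  under eq_fun do rewrite ev.
  rewrite ev.
  apply: netlimK_add => //.
    exact: (proj2 (Nw z1) I le u x dir hu g Qg).
  exact: (hDw dir hu (proj2 (Qmod z2 Qg))).
move=> I le u x dir hu q hq.
have [z1 hz1] := Qrep (psi_dual hq).
have ev : forall a, q (ractT mul (Tg g) a) = g (lact a z1).
  by move=> a; rewrite ractT_T hz1 //; exact: (proj2 (Qmod a Qg)).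
under eq_fun do rewrite ev.
rewrite ev.
exact: (proj1 (Nw z1) I le u x dir hu g Qg).
Qed.


Lemma main_inner : unital mul -> johnson_pseudo_connes_amenable mul P ->
  approx_inner lact ract D.
Proof.
case=> e he [I [le [m [dir [mb [msym [y [hy hyl]]]]]]]].
have hx : forall i, exists x, forall g, Q g -> m i (Tg g) = g x.
  by move=> i; exact: (Qrep (psi_dual (mb i))).
have [xs hxs] := boolp.choice hx.
have key : forall i a, lact a (xs i) - ract (xs i) a = lact (y i) (D a).
  move=> i a; apply: Qsep => g Qg.
  have lg := proj1 (Qd Qg).
  rewrite (linB _ _ lg).
  have Qa := Qmod a Qg.
  have e1 : g (lact a (xs i)) = m i (Tg (fun z => g (lact a z))).
    exact: (esym (hxs i _ (proj2 Qa))).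
  have e2 : g (ract (xs i) a) = m i (Tg (fun z => g (ract z a))).
    exact: (esym (hxs i _ (proj1 Qa))).
  have e3 : m i (pif (fun x => g (lact x (D a)))) = g (lact (y i) (D a)).
    exact: (esym (hy i _ (wc_lact (D a) Qg))).
  rewrite e1 e2 -ractT_T (msym i a _ (Tg_wc Qg)) (lactT_dec a Qg).
  rewrite (proj1 (mb i) _ _ (Tg_bbil (proj1 Qa)) (pif_bbil (Pd (wc_lact (D a) Qg)))).
  by rewrite e3 addrC addKr.
have De : D e = lact e (D e) + ract (D e) e.
  by rewrite -{1}(proj1 (he e)) DM.
have h1 : lact e (ract (D e) e) = 0.
  have := congr1 (lact e) De; rewrite lDr -lM (proj1 (he e)).
  by rewrite -{1}(addr0 (lact e (D e))) => /addrI <-.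
have h2 : forall a, ract (lact e (D e)) a = 0.
  by move=> a; rewrite -{1}(proj1 (he a)) rM lr h1 ract0.
pose w := lact e (D e) - D e.
exists I, le, (fun i => xs i + w); split => // a eps eps0.
have Da : D a = lact e (D a) + ract (D e) a by rewrite -{1}(proj1 (he a)) DM.
have ew : lact a w - ract w a = ract (D e) a.
  rewrite /w lactBr -lM (proj2 (he a)) subrr ractBl h2.
  by rewrite !sub0r opprK.
have eq : forall i, lact a (xs i + w) - ract (xs i + w) a - D a
    = lact (y i) (D a) - lact e (D a).
  move=> i; rewrite lDr rDl opprD addrACA key ew {2}Da.
  by rewrite opprD addrACA subrr addr0.
set d := `|D a|.
have d1 : 0 < d + 1 by rewrite ltr_wpDl // normr_ge0.
have epsd : 0 < eps / (d + 1) by rewrite divr_gt0.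
have [i0 hi0] := hyl e _ epsd.
exists i0 => i hi.
rewrite eq -lactBl; apply: le_lt_trans (lN _ _) _.
have := hi0 i hi; rewrite (proj2 (he (y i))) => hy'.
apply: (@le_lt_trans _ _ (eps / (d + 1) * d)).
  by apply: ler_wpM2r; [exact: normr_ge0|exact: ltW].
by rewrite mulrAC ltr_pdivrMr // ltr_pM2l // ltrDl ltr01.
Qed.

End Main.

Theorem generic_main (K : numFieldType)
  (archi : forall c : K, 0 <= c -> exists n : nat, c < n%:R)
  (A : completeNormedModType K) (mul : A -> A -> A) (P : set (A -> K)) :
  dual_banach_algebra mul P -> unital mul ->
  johnson_pseudo_connes_amenable mul P ->
  approx_connes_amenable mul P.
Proof.
move=> hA hu hj E lact ract Q hE hN D hD hDw.
exact: (main_inner archi hA hE hN hD hDw hu hj).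
Qed.

Local Open Scope complex_scope.
Lemma archiC (R : realType) : forall c : R[i], 0 <= c -> exists n : nat, c < n%:R.
Proof.
move=> c c0; have cr : c \is Num.real := ger0_real c0.
rewrite -(RRe_real cr) in c0 *.
have z : (0 : R[i]) = (0 : R)%:C by rewrite (rmorph0 (real_complex R)).
rewrite z lecR in c0.
exists (Num.bound (complex.Re c)).
have -> : ((Num.bound (complex.Re c))%:R : R[i]) = ((Num.bound (complex.Re c))%:R : R)%:C.
  by rewrite -(rmorph_nat (real_complex R)).
by rewrite ltcR; apply: archi_boundP.
Qed.

Unset Implicit Arguments.

Theorem lemma2p5 (R : realType) (A : completeNormedModType R[i])
  (mul : A -> A -> A) (P : set (A -> R[i])) :
  dual_banach_algebra mul P -> unital mul ->
  johnson_pseudo_connes_amenable mul P ->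
  approx_connes_amenable mul P.
Proof.
exact: (generic_main (@archiC R)).
Qed.
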